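(* Let $N\ge3$, suppose $\boldsymbol{\mathfrak h}\notin\mathrm{col}(C)$, let $\mathbf p=\mathrm{proj}_{\ker(C)}\boldsymbol{\mathfrak h}$ (orthogonal projection), $\gamma_{\max}=\|\mathbf p\|_\infty^{-1}$, and let $\gamma\in\mathbb{R}$ with $0<|\gamma|\le\gamma_{\max}$. Set $\tilde{\boldsymbol{\mathfrak b}}=\gamma\mathbf p$ and $\boldsymbol\theta=\tfrac12\arccos\tilde{\boldsymbol{\mathfrak b}}$ (entrywise). Then the dephasing code associated with $\boldsymbol\theta$ satisfies $PSP\in\mathbb{R}P$ for all $S\in\mathfrak{S}$, and $PHP=\tfrac{\gamma}{2}\|\mathbf p\|_2^2\,Z_L\not\propto P$. Moreover, if $\ker(C)$ is one-dimensional and $\gamma=\gamma_{\max}$, then $\tilde{\boldsymbol{\mathfrak b}}$ is an optimal solution of the problem: maximize $\boldsymbol{\mathfrak b}\cdot\boldsymbol{\mathfrak h}$ subject to $\|\boldsymbol{\mathfrak b}\|_\infty\le1$, $\boldsymbol{\mathfrak b}\perp\mathrm{col}(C)$.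
   Context: Qubits $1,\dots,N$; $Z_j$, $X_j$ denote the Pauli $Z$, $X$ operators on qubit $j$ of $(\mathbb{C}^2)^{\otimes N}$. For $\mathbf v\in\mathbb{R}^N$, $\mathbf v\cdot\mathbf Z:=\sum_j v_jZ_j$. Dephasing model: $\boldsymbol{\mathfrak h}\in\mathbb{R}^N$, $H=\tfrac12\boldsymbol{\mathfrak h}\cdot\mathbf Z$; $C$ is a real symmetric positive semidefinite $N\times N$ matrix with orthonormal eigenvectors $\mathbf v_1,\dots,\mathbf v_N$ and eigenvalues $\lambda_1,\dots,\lambda_N\ge0$; $L_j=\sqrt{\lambda_j}\,\mathbf v_j\cdot\mathbf Z$; $\mathrm{col}(C),\ker(C)$ are column space and kernel of $C$; the Lindblad span $\mathfrak{S}$ is the real span of $I$, all $L_i$ and all $L_iL_j$. Dephasing code for $\boldsymbol\theta\in\mathbb{R}^N$: $|0_L\rangle=\bigotimes_{j=1}^N(\cos\theta_j|0\rangle+i\sin\theta_j|1\rangle)$, $|1_L\rangle=X^{\otimes N}|0_L\rangle$, $P=|0_L\rangle\langle0_L|+|1_L\rangle\langle1_L|$, $Z_L=|0_L\rangle\langle0_L|-|1_L\rangle\langle1_L|$. *)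

(* Defs.v *)
From Stdlib Require Import Reals Lra Lia List Bool Arith.
Open Scope R_scope.

Fixpoint rsum (n : nat) (f : nat -> R) : R :=
  match n with O => 0 | S m => rsum m f + f m end.

Definition rvec := nat -> R.          (* entries j < N are meaningful *)
Definition rmat := nat -> nat -> R.

Definition dot (N : nat) (u v : rvec) : R := rsum N (fun j => u j * v j).
Definition matvec (N : nat) (C : rmat) (x : rvec) : rvec :=
  fun i => rsum N (fun j => C i j * x j).

Definition in_col (N : nat) (C : rmat) (w : rvec) : Prop :=
  exists y : rvec, forall i, (i < N)%nat -> matvec N C y i = w i.
Definition in_ker (N : nat) (C : rmat) (x : rvec) : Prop :=
  forall i, (i < N)%nat -> matvec N C x i = 0.
Definition is_orth_proj_ker (N : nat) (C : rmat) (h p : rvec) : Prop :=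
  in_ker N C p /\ forall w, in_ker N C w -> dot N (fun j => h j - p j) w = 0.
Definition ker_dim1 (N : nat) (C : rmat) : Prop :=
  exists u, in_ker N C u /\ (exists j, (j < N)%nat /\ u j <> 0) /\
    forall w, in_ker N C w -> exists t : R, forall j, (j < N)%nat -> w j = t * u j.

Definition infnorm (N : nat) (p : rvec) : R :=
  fold_right Rmax 0 (map (fun j => Rabs (p j)) (seq 0 N)).
Definition norm2sq (N : nat) (p : rvec) : R := dot N p p.

Definition feasible (N : nat) (C : rmat) (b : rvec) : Prop :=
  infnorm N b <= 1 /\ forall w, in_col N C w -> dot N b w = 0.
Definition optimal (N : nat) (C : rmat) (h b : rvec) : Prop :=
  feasible N C b /\ forall b', feasible N C b' -> dot N b' h <= dot N b h.

Record Cx := mkC { re : R; im : R }.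
Definition RtoC (r : R) : Cx := mkC r 0.
Definition C0 : Cx := mkC 0 0.
Definition C1 : Cx := mkC 1 0.
Definition Cadd (a b : Cx) : Cx := mkC (re a + re b) (im a + im b).
Definition Cmul (a b : Cx) : Cx :=
  mkC (re a * re b - im a * im b) (re a * im b + im a * re b).
Definition Cconj (a : Cx) : Cx := mkC (re a) (- im a).
Fixpoint csum (n : nat) (f : nat -> Cx) : Cx :=
  match n with O => C0 | S m => Cadd (csum m f) (f m) end.
Fixpoint cprod (n : nat) (f : nat -> Cx) : Cx :=
  match n with O => C1 | S m => Cmul (cprod m f) (f m) end.

(* ---------- N-qubit operators on (C^2)^{⊗N} ----------
   Basis |x>, x < 2^N; qubit j is bit j of x (bit 0 = |0>, bit 1 = |1>). *)
Definition Op := nat -> nat -> Cx.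
Definition ket := nat -> Cx.

Definition op_eq (N : nat) (A B : Op) : Prop :=
  forall x y, (x < 2 ^ N)%nat -> (y < 2 ^ N)%nat -> A x y = B x y.
Definition Omul (N : nat) (A B : Op) : Op :=
  fun x y => csum (2 ^ N) (fun k => Cmul (A x k) (B k y)).
Definition Oadd (A B : Op) : Op := fun x y => Cadd (A x y) (B x y).
Definition Oscale (c : Cx) (A : Op) : Op := fun x y => Cmul c (A x y).
Definition Oid : Op := fun x y => if Nat.eqb x y then C1 else C0.
Definition Osum (n : nat) (F : nat -> Op) : Op := fun x y => csum n (fun i => F i x y).
Definition Oapp (N : nat) (A : Op) (psi : ket) : ket :=
  fun x => csum (2 ^ N) (fun y => Cmul (A x y) (psi y)).
Definition outer (psi phi : ket) : Op := fun x y => Cmul (psi x) (Cconj (phi y)).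

Definition zsign (j x : nat) : R := if Nat.testbit x j then -1 else 1.
Definition Zop (j : nat) : Op := fun x y => if Nat.eqb x y then RtoC (zsign j x) else C0.
Definition vZ (N : nat) (v : rvec) : Op := Osum N (fun j => Oscale (RtoC (v j)) (Zop j)).
Definition Xall (N : nat) : Op := fun x y =>
  if forallb (fun j => negb (Bool.eqb (Nat.testbit x j) (Nat.testbit y j))) (seq 0 N)
  then C1 else C0.

Definition Ham (N : nat) (h : rvec) : Op := Oscale (RtoC (1/2)) (vZ N h).
(* L_j = sqrt(lambda_j) v_j . Z ; vs j is the j-th eigenvector *)
Definition Lop (N : nat) (lam : nat -> R) (vs : nat -> rvec) (j : nat) : Op :=
  Oscale (RtoC (sqrt (lam j))) (vZ N (vs j)).
Definition in_lindblad_span (N : nat) (lam : nat -> R) (vs : nat -> rvec) (S : Op) : Prop :=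
  exists (a : R) (b : nat -> R) (c : nat -> nat -> R),
    op_eq N S
      (Oadd (Oscale (RtoC a) Oid)
        (Oadd (Osum N (fun i => Oscale (RtoC (b i)) (Lop N lam vs i)))
              (Osum N (fun i => Osum N (fun j =>
                  Oscale (RtoC (c i j)) (Omul N (Lop N lam vs i) (Lop N lam vs j))))))).

Definition ket0L (N : nat) (theta : rvec) : ket := fun x =>
  cprod N (fun j => if Nat.testbit x j then mkC 0 (sin (theta j))
                    else mkC (cos (theta j)) 0).
Definition ket1L (N : nat) (theta : rvec) : ket := Oapp N (Xall N) (ket0L N theta).
Definition codeP (N : nat) (theta : rvec) : Op :=
  Oadd (outer (ket0L N theta) (ket0L N theta)) (outer (ket1L N theta) (ket1L N theta)).
Definition codeZL (N : nat) (theta : rvec) : Op :=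
  Oadd (outer (ket0L N theta) (ket0L N theta))
       (Oscale (RtoC (-1)) (outer (ket1L N theta) (ket1L N theta))).

(* Main.v *)
Require Import Defs.
From Stdlib Require Import Reals Lra Lia Arith List Bool Ring.
Import Defs.
Open Scope R_scope.

Lemma Cx_eq : forall a b : Cx, re a = re b -> im a = im b -> a = b.
Proof. intros [a1 a2] [b1 b2]; simpl; intros; subst; reflexivity. Qed.

Definition Copp (a : Cx) : Cx := mkC (- re a) (- im a).
Definition Csub (a b : Cx) : Cx := Cadd a (Copp b).

Lemma Cx_ring : ring_theory C0 C1 Cadd Cmul Csub Copp (@eq Cx).
Proof.
  constructor; intros; apply Cx_eq; destruct x; try destruct y; try destruct z;
  simpl; ring.
Qed.
Add Ring Cxring : Cx_ring.

Ltac cx := apply Cx_eq; simpl; ring.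

Lemma csum_ext : forall n f g, (forall i, (i < n)%nat -> f i = g i) -> csum n f = csum n g.
Proof. induction n; intros f g H; simpl; auto.
  rewrite (IHn f g) by (intros; apply H; lia). rewrite H by lia. reflexivity. Qed.
Lemma cprod_ext : forall n f g, (forall i, (i < n)%nat -> f i = g i) -> cprod n f = cprod n g.
Proof. induction n; intros f g H; simpl; auto.
  rewrite (IHn f g) by (intros; apply H; lia). rewrite H by lia. reflexivity. Qed.
Lemma rsum_ext : forall n f g, (forall i, (i < n)%nat -> f i = g i) -> rsum n f = rsum n g.
Proof. induction n; intros f g H; simpl; auto.
  rewrite (IHn f g) by (intros; apply H; lia). rewrite H by lia. reflexivity. Qed.

Lemma csum_add : forall n f g, csum n (fun i => Cadd (f i) (g i)) = Cadd (csum n f) (csum n g).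
Proof. induction n; intros; simpl. cx. rewrite IHn. ring. Qed.
Lemma csum_mull : forall n c f, csum n (fun i => Cmul c (f i)) = Cmul c (csum n f).
Proof. induction n; intros; simpl. cx. rewrite IHn. ring. Qed.
Lemma csum_mulr : forall n c f, csum n (fun i => Cmul (f i) c) = Cmul (csum n f) c.
Proof. induction n; intros; simpl. cx. rewrite IHn. ring. Qed.
Lemma csum_zero : forall n f, (forall i, (i < n)%nat -> f i = C0) -> csum n f = C0.
Proof. induction n; intros f H; simpl; auto. rewrite IHn by (intros; apply H; lia).
  rewrite H by lia. cx. Qed.
Lemma csum_swap : forall n m (f : nat -> nat -> Cx),
  csum n (fun i => csum m (f i)) = csum m (fun j => csum n (fun i => f i j)).
Proof. induction n; intros; simpl.
  - symmetry; apply csum_zero; auto.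
  - rewrite IHn. rewrite <- csum_add. reflexivity. Qed.
Lemma csum_RtoC : forall n f, csum n (fun i => RtoC (f i)) = RtoC (rsum n f).
Proof. induction n; intros; simpl. reflexivity. rewrite IHn. cx. Qed.
Lemma RtoC_add : forall a b, RtoC (a + b) = Cadd (RtoC a) (RtoC b).
Proof. intros; cx. Qed.
Lemma RtoC_mul : forall a b, RtoC (a * b) = Cmul (RtoC a) (RtoC b).
Proof. intros; cx. Qed.
Lemma RtoC_opp : forall a, RtoC (- a) = Copp (RtoC a).
Proof. intros; cx. Qed.

Lemma csum_ind : forall n x f, (x < n)%nat ->
  csum n (fun y => if Nat.eqb x y then f y else C0) = f x.
Proof. induction n; intros x f H; simpl. lia.
  destruct (Nat.eq_dec x n).
  - subst. rewrite Nat.eqb_refl. rewrite csum_zero. cx.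
    intros i Hi. destruct (Nat.eqb_spec n i); auto; lia.
  - destruct (Nat.eqb_spec x n); try lia. rewrite IHn by lia. cx. Qed.

Lemma cprod_mul : forall n f g, cprod n (fun i => Cmul (f i) (g i)) = Cmul (cprod n f) (cprod n g).
Proof. induction n; intros; simpl. cx. rewrite IHn. ring. Qed.
Lemma cprod_shift : forall n f, cprod (S n) f = Cmul (f O) (cprod n (fun j => f (S j))).
Proof. induction n; intros; simpl. ring. simpl in IHn. rewrite IHn. ring. Qed.
Lemma cprod_zero : forall n f j, (j < n)%nat -> f j = C0 -> cprod n f = C0.
Proof. induction n; intros f j Hj H; simpl. lia.
  destruct (Nat.eq_dec j n). subst. rewrite H. ring.
  rewrite (IHn f j) by (auto; lia). ring. Qed.
Lemma cprod_one : forall n f, (forall j, (j < n)%nat -> f j = C1) -> cprod n f = C1.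
Proof. induction n; intros f H; simpl. auto. rewrite IHn by (intros; apply H; lia).
  rewrite H by lia. ring. Qed.
Lemma cprod_single : forall n k f, (k < n)%nat ->
  cprod n (fun j => if Nat.eqb j k then f j else C1) = f k.
Proof. induction n; intros k f H; simpl. lia.
  destruct (Nat.eq_dec k n).
  - subst. rewrite Nat.eqb_refl. rewrite cprod_one. ring.
    intros j Hj. destruct (Nat.eqb_spec j n); auto; lia.
  - destruct (Nat.eqb_spec n k); try lia. rewrite IHn by lia. ring. Qed.
Lemma Cconj_mul : forall a b, Cconj (Cmul a b) = Cmul (Cconj a) (Cconj b).
Proof. intros; cx. Qed.
Lemma cprod_conj : forall n f, Cconj (cprod n f) = cprod n (fun j => Cconj (f j)).
Proof. induction n; intros; simpl. cx. rewrite Cconj_mul, IHn. reflexivity. Qed.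
Lemma cprod_RtoC : forall n f, cprod n (fun i => RtoC (f i)) = RtoC (fold_right Rmult 1 (map f (seq 0 n))).
Abort.

Lemma csum_S : forall m g, csum (S m) g = Cadd (csum m g) (g m).
Proof. reflexivity. Qed.
Lemma csum_double : forall m f, csum (2 * m) f = csum m (fun y => Cadd (f (2 * y)%nat) (f (2 * y + 1)%nat)).
Proof. induction m; intros. reflexivity.
  replace (2 * S m)%nat with (S (S (2 * m))) by lia.
  rewrite !csum_S. rewrite IHm. replace (2 * m + 1)%nat with (S (2*m)) by lia.
  rewrite <- Cx_ring.(Radd_assoc). reflexivity. Qed.

Lemma prodsum : forall N (g : nat -> bool -> Cx),
  csum (2 ^ N) (fun x => cprod N (fun j => g j (Nat.testbit x j)))
  = cprod N (fun j => Cadd (g j false) (g j true)).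
Proof.
  induction N; intros g.
  - simpl. cx.
  - change (2 ^ S N)%nat with (2 * 2 ^ N)%nat. rewrite csum_double.
    rewrite cprod_shift.
    rewrite <- (IHN (fun j => g (S j))). rewrite <- csum_mull.
    apply csum_ext. intros y _.
    rewrite !cprod_shift.
    rewrite Nat.testbit_even_0, Nat.testbit_odd_0.
    rewrite (cprod_ext _ (fun j => g (S j) (Nat.testbit (2 * y) (S j)))
       (fun j => g (S j) (Nat.testbit y j))).
    rewrite (cprod_ext _ (fun j => g (S j) (Nat.testbit (2 * y + 1) (S j)))
       (fun j => g (S j) (Nat.testbit y j))).
    ring.
    all: intros; rewrite ?Nat.testbit_even_succ, ?Nat.testbit_odd_succ by lia; reflexivity.
Qed.

Definition phi (th : rvec) (j : nat) (b : bool) : Cx :=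
  if b then mkC 0 (sin (th j)) else mkC (cos (th j)) 0.
Definition psi (N : nat) (th : rvec) (a : bool) (x : nat) : Cx :=
  cprod N (fun j => phi th j (xorb a (Nat.testbit x j))).

Lemma ket0L_psi : forall N th x, ket0L N th x = psi N th false x.
Proof. reflexivity. Qed.

Lemma forallb_cprod : forall N (q : nat -> bool),
  (if forallb q (seq 0 N) then C1 else C0) = cprod N (fun j => if q j then C1 else C0).
Proof. induction N; intros. reflexivity.
  rewrite seq_S, forallb_app. change (cprod (S N) ?f) with (Cmul (cprod N f) (f N)). rewrite <- IHN. simpl.
  destruct (forallb q (seq 0 N)), (q N); simpl; cx. Qed.

Lemma ket1L_psi : forall N th x, ket1L N th x = psi N th true x.
Proof. intros. unfold ket1L, Oapp, Xall. 
  rewrite (csum_ext _ _ (fun y => cprod N (fun j =>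
     Cmul (if negb (Bool.eqb (Nat.testbit x j) (Nat.testbit y j)) then C1 else C0)
          (phi th j (Nat.testbit y j))))).
  - rewrite (prodsum N (fun j b => Cmul (if negb (Bool.eqb (Nat.testbit x j) b) then C1 else C0)
          (phi th j b))). unfold psi. apply cprod_ext. intros j _.
    destruct (Nat.testbit x j); simpl; cx.
  - intros y _. rewrite forallb_cprod. rewrite ket0L_psi. unfold psi. rewrite <- cprod_mul.
    reflexivity.
Qed.

Definition Sw (N : nat) (th : rvec) (a b : bool) (A : Op) : Cx :=
  csum (2 ^ N) (fun x => csum (2 ^ N) (fun y =>
    Cmul (Cmul (Cconj (psi N th a x)) (A x y)) (psi N th b y))).

Lemma Sw_ext : forall N th a b A B,
  (forall x y, (x < 2 ^ N)%nat -> (y < 2 ^ N)%nat -> A x y = B x y) ->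
  Sw N th a b A = Sw N th a b B.
Proof. intros. unfold Sw. apply csum_ext; intros. apply csum_ext; intros.
  rewrite H by auto. reflexivity. Qed.
Lemma Sw_add : forall N th a b A B, Sw N th a b (Oadd A B) = Cadd (Sw N th a b A) (Sw N th a b B).
Proof. intros. unfold Sw, Oadd. rewrite <- csum_add. apply csum_ext; intros.
  rewrite <- csum_add. apply csum_ext; intros. ring. Qed.
Lemma Sw_scale : forall N th a b c A, Sw N th a b (Oscale c A) = Cmul c (Sw N th a b A).
Proof. intros. unfold Sw, Oscale. rewrite <- csum_mull. apply csum_ext; intros.
  rewrite <- csum_mull. apply csum_ext; intros. ring. Qed.
Lemma Sw_sum : forall N th a b n F, Sw N th a b (Osum n F) = csum n (fun i => Sw N th a b (F i)).
Proof. intros. unfold Sw, Osum.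
  rewrite (csum_ext _ _ (fun x => csum n (fun i => csum (2^N) (fun y =>
     Cmul (Cmul (Cconj (psi N th a x)) (F i x y)) (psi N th b y))))).
  - rewrite csum_swap. apply csum_ext; intros. reflexivity.
  - intros x _. rewrite (csum_ext _ _ (fun y => csum n (fun i =>
     Cmul (Cmul (Cconj (psi N th a x)) (F i x y)) (psi N th b y)))).
    apply csum_swap. intros y _. rewrite csum_mulr, csum_mull. reflexivity.
Qed.

Lemma Sw_diag : forall N th a b A d,
  (forall x y, (x < 2 ^ N)%nat -> (y < 2 ^ N)%nat -> A x y = if Nat.eqb x y then d x else C0) ->
  Sw N th a b A = csum (2 ^ N) (fun x => Cmul (Cmul (Cconj (psi N th a x)) (d x)) (psi N th b x)).
Proof. intros. unfold Sw. apply csum_ext; intros x Hx.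
  rewrite (csum_ext _ _ (fun y => if Nat.eqb x y then
      Cmul (Cmul (Cconj (psi N th a x)) (d x)) (psi N th b y) else C0)).
  apply csum_ind; auto.
  intros y Hy. rewrite H by auto. destruct (Nat.eqb x y); ring. Qed.

Definition wt (e : nat -> R) (N x : nat) : Cx :=
  cprod N (fun j => if Nat.testbit x j then RtoC (e j) else C1).

Definition T (th : rvec) (e : nat -> R) (a b : bool) (j : nat) : Cx :=
  Cadd (Cmul (Cconj (phi th j a)) (phi th j b))
       (Cmul (Cmul (Cconj (phi th j (negb a))) (RtoC (e j))) (phi th j (negb b))).

Lemma KL : forall N th e a b,
  csum (2 ^ N) (fun x => Cmul (Cmul (Cconj (psi N th a x)) (wt e N x)) (psi N th b x))
  = cprod N (fun j => T th e a b j).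
Proof. intros.
  set (g := fun j bt => Cmul (Cmul (Cconj (phi th j (xorb a bt))) (if bt then RtoC (e j) else C1))
        (phi th j (xorb b bt))).
  transitivity (csum (2 ^ N) (fun x => cprod N (fun j => g j (Nat.testbit x j)))).
  - apply csum_ext; intros x _. unfold psi, wt.
    rewrite cprod_conj, <- !cprod_mul. apply cprod_ext; intros. unfold g.
    destruct (Nat.testbit x i), a, b; reflexivity.
  - rewrite prodsum. apply cprod_ext. intros. unfold T, g.
    destruct a, b; simpl; ring.
Qed.

Lemma T_off : forall th e a j, e j = 1 -> T th e a (negb a) j = C0.
Proof. intros. unfold T, phi. rewrite H. destruct a; simpl; cx. Qed.

Lemma T_diag0 : forall th e j, T th e false false j =
   RtoC (cos (th j) * cos (th j) + sin (th j) * sin (th j) * e j).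
Proof. intros; unfold T, phi; simpl; cx. Qed.
Lemma T_diag1 : forall th e j, T th e true true j =
   RtoC (sin (th j) * sin (th j) + cos (th j) * cos (th j) * e j).
Proof. intros; unfold T, phi; simpl; cx. Qed.

Lemma Sw_w : forall N th a b A e,
  (forall x y, (x < 2 ^ N)%nat -> (y < 2 ^ N)%nat -> A x y = if Nat.eqb x y then wt e N x else C0) ->
  Sw N th a b A = cprod N (T th e a b).
Proof. intros. rewrite (Sw_diag _ _ _ _ _ (fun x => wt e N x)) by auto. apply KL. Qed.

Definition ez (k j : nat) : R := if Nat.eqb j k then -1 else 1.

Lemma wt_one : forall N x, wt (fun _ => 1) N x = C1.
Proof. intros. unfold wt. apply cprod_one. intros. destruct (Nat.testbit x j); reflexivity. Qed.

Lemma wt_ez : forall N k x, (k < N)%nat -> wt (ez k) N x = RtoC (zsign k x).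
Proof. intros. unfold wt.
  rewrite (cprod_ext _ _ (fun j => if Nat.eqb j k then RtoC (zsign j x) else C1)).
  - rewrite cprod_single by auto. reflexivity.
  - intros j _. unfold ez, zsign. destruct (Nat.eqb j k), (Nat.testbit x j); reflexivity.
Qed.

Lemma wt_mul : forall N e1 e2 x, wt (fun j => e1 j * e2 j) N x = Cmul (wt e1 N x) (wt e2 N x).
Proof. intros. unfold wt. rewrite <- cprod_mul. apply cprod_ext; intros.
  destruct (Nat.testbit x i); cx. Qed.

Lemma Oid_w : forall N x y, Oid x y = if Nat.eqb x y then wt (fun _ => 1) N x else C0.
Proof. intros. rewrite wt_one. reflexivity. Qed.

Lemma Zop_w : forall N k x y, (k < N)%nat -> Zop k x y = if Nat.eqb x y then wt (ez k) N x else C0.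
Proof. intros. rewrite wt_ez by auto. reflexivity. Qed.

Lemma ZZ_w : forall N k l x y, (k < N)%nat -> (l < N)%nat -> (x < 2 ^ N)%nat ->
  Omul N (Zop k) (Zop l) x y = if Nat.eqb x y then wt (fun j => ez k j * ez l j) N x else C0.
Proof. intros. unfold Omul. rewrite wt_mul, wt_ez, wt_ez by auto.
  rewrite (csum_ext _ _ (fun z => if Nat.eqb x z then Cmul (RtoC (zsign k x)) (Zop l z y) else C0)).
  - rewrite csum_ind by auto. unfold Zop. destruct (Nat.eqb x y); ring.
  - intros z _. unfold Zop at 1. destruct (Nat.eqb_spec x z). subst. reflexivity. ring.
Qed.

Lemma cs1 : forall t, cos t * cos t + sin t * sin t = 1.
Proof. intros. pose proof (sin2_cos2 t). unfold Rsqr in H. lra. Qed.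

Lemma cprod_T_off : forall N th e a, (exists j, (j < N)%nat /\ e j = 1) ->
  cprod N (T th e a (negb a)) = C0.
Proof. intros N th e a [j [Hj He]]. apply (cprod_zero _ _ j Hj). apply T_off; auto. Qed.

Lemma cprod_T_one : forall N th a, cprod N (T th (fun _ => 1) a a) = C1.
Proof. intros. apply cprod_one. intros. destruct a; [rewrite T_diag1|rewrite T_diag0];
  apply Cx_eq; simpl; auto; pose proof (cs1 (th j)); lra. Qed.

Definition Dq (th : rvec) (j : nat) : R := cos (th j) * cos (th j) - sin (th j) * sin (th j).

Lemma cprod_T_ez0 : forall N th k, (k < N)%nat -> cprod N (T th (ez k) false false) = RtoC (Dq th k).
Proof. intros. rewrite (cprod_ext _ _ (fun j => if Nat.eqb j k then RtoC (Dq th j) else C1)).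
  apply cprod_single; auto.
  intros. rewrite T_diag0. unfold ez, Dq. pose proof (cs1 (th i)).
  destruct (Nat.eqb i k); apply Cx_eq; simpl; lra. Qed.
Lemma cprod_T_ez1 : forall N th k, (k < N)%nat -> cprod N (T th (ez k) true true) = RtoC (- Dq th k).
Proof. intros. rewrite (cprod_ext _ _ (fun j => if Nat.eqb j k then RtoC (- Dq th j) else C1)).
  apply cprod_single; auto.
  intros. rewrite T_diag1. unfold ez, Dq. pose proof (cs1 (th i)).
  destruct (Nat.eqb i k); apply Cx_eq; simpl; lra. Qed.

Definition rr (th : rvec) (k l : nat) : R := if Nat.eqb k l then 1 else Dq th k * Dq th l.

Lemma cprod_T_ezz : forall N th a k l, (k < N)%nat -> (l < N)%nat ->
  cprod N (T th (fun j => ez k j * ez l j) a a) = RtoC (rr th k l).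
Proof. intros. unfold rr. destruct (Nat.eqb_spec k l).
  - subst. transitivity (cprod N (T th (fun _ => 1) a a)); [|apply cprod_T_one]. apply cprod_ext; intros.
    unfold T. f_equal. f_equal. f_equal. f_equal. unfold ez. destruct (Nat.eqb i l); ring.
  - rewrite (cprod_ext _ _ (fun j => Cmul (if Nat.eqb j k then RtoC (if a then - Dq th j else Dq th j) else C1)
                                           (if Nat.eqb j l then RtoC (if a then - Dq th j else Dq th j) else C1))).
    + rewrite cprod_mul, !cprod_single by auto. destruct a; cx.
    + intros. destruct a; [rewrite T_diag1|rewrite T_diag0]; unfold ez, Dq; pose proof (cs1 (th i));
      destruct (Nat.eqb_spec i k), (Nat.eqb_spec i l); subst; try lia; apply Cx_eq; simpl; nra.
Qed.

Lemma codeP_psi : forall N th x y, codeP N th x y =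
  Cadd (Cmul (psi N th false x) (Cconj (psi N th false y))) (Cmul (psi N th true x) (Cconj (psi N th true y))).
Proof. intros. unfold codeP, Oadd, outer. rewrite !ket1L_psi. reflexivity. Qed.
Lemma codeZL_psi : forall N th x y, codeZL N th x y =
  Cadd (Cmul (psi N th false x) (Cconj (psi N th false y)))
   (Cmul (RtoC (-1)) (Cmul (psi N th true x) (Cconj (psi N th true y)))).
Proof. intros. unfold codeZL, Oadd, Oscale, outer. rewrite !ket1L_psi. reflexivity. Qed.

Definition U N th (S : Op) b k := csum (2 ^ N) (fun l => Cmul (S k l) (psi N th b l)).

Lemma Sw_U : forall N th a b S, Sw N th a b S = csum (2 ^ N) (fun k => Cmul (Cconj (psi N th a k)) (U N th S b k)).
Proof. intros. unfold Sw, U. apply csum_ext; intros. rewrite <- csum_mull. apply csum_ext; intros. ring. Qed.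

Lemma PSP_formula : forall N th S x y,
  Omul N (codeP N th) (Omul N S (codeP N th)) x y =
  Cadd (Cadd (Cmul (Cmul (psi N th false x) (Cconj (psi N th false y))) (Sw N th false false S))
             (Cmul (Cmul (psi N th false x) (Cconj (psi N th true y))) (Sw N th false true S)))
       (Cadd (Cmul (Cmul (psi N th true x) (Cconj (psi N th false y))) (Sw N th true false S))
             (Cmul (Cmul (psi N th true x) (Cconj (psi N th true y))) (Sw N th true true S))).
Proof. intros. unfold Omul. rewrite !Sw_U.
  set (p0x := psi N th false x). set (p1x := psi N th true x).
  set (c0y := Cconj (psi N th false y)). set (c1y := Cconj (psi N th true y)).
  rewrite (csum_ext _ _ (fun k =>
    Cadd (Cadd (Cmul (Cmul p0x c0y) (Cmul (Cconj (psi N th false k)) (U N th S false k)))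
               (Cmul (Cmul p0x c1y) (Cmul (Cconj (psi N th false k)) (U N th S true k))))
         (Cadd (Cmul (Cmul p1x c0y) (Cmul (Cconj (psi N th true k)) (U N th S false k)))
               (Cmul (Cmul p1x c1y) (Cmul (Cconj (psi N th true k)) (U N th S true k)))))).
  - rewrite !csum_add, !csum_mull. reflexivity.
  - intros k _. 
    assert (E : csum (2 ^ N) (fun l => Cmul (S k l) (codeP N th l y)) =
       Cadd (Cmul (U N th S false k) c0y) (Cmul (U N th S true k) c1y)).
    { unfold U. rewrite <- !csum_mulr, <- csum_add. apply csum_ext; intros.
      rewrite codeP_psi. fold c0y c1y. ring. }
    rewrite E, codeP_psi. fold p0x p1x. ring.
Qed.

Lemma csum_prod : forall n m f g, Cmul (csum n f) (csum m g) = csum n (fun k => csum m (fun l => Cmul (f k) (g l))).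
Proof. intros. rewrite <- csum_mulr. apply csum_ext; intros. rewrite <- csum_mull. reflexivity. Qed.

Lemma Omul_LL : forall N n m c c' u w A B x y,
  Omul N (Oscale c (Osum n (fun k => Oscale (RtoC (u k)) (A k))))
         (Oscale c' (Osum m (fun l => Oscale (RtoC (w l)) (B l)))) x y
  = Osum n (fun k => Osum m (fun l => Oscale (Cmul (Cmul c c') (Cmul (RtoC (u k)) (RtoC (w l))))
        (Omul N (A k) (B l)))) x y.
Proof. intros. unfold Omul, Oscale, Osum.
  rewrite (csum_ext _ _ (fun z => csum n (fun k => csum m (fun l =>
     Cmul (Cmul (Cmul c c') (Cmul (RtoC (u k)) (RtoC (w l)))) (Cmul (A k x z) (B l z y)))))).
  - rewrite csum_swap. apply csum_ext; intros k _. rewrite csum_swap. apply csum_ext; intros l _.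
    rewrite csum_mull. reflexivity.
  - intros z _. 
    replace (Cmul (Cmul c (csum n (fun i => Cmul (RtoC (u i)) (A i x z))))
                  (Cmul c' (csum m (fun i => Cmul (RtoC (w i)) (B i z y)))))
      with (Cmul (Cmul c c') (Cmul (csum n (fun i => Cmul (RtoC (u i)) (A i x z)))
                  (csum m (fun i => Cmul (RtoC (w i)) (B i z y))))) by ring.
    rewrite csum_prod, <- csum_mull. apply csum_ext; intros. rewrite <- csum_mull.
    apply csum_ext; intros. ring.
Qed.

Lemma Sw_Oid : forall N th a b, (1 <= N)%nat ->
  Sw N th a b Oid = if Bool.eqb a b then C1 else C0.
Proof. intros. rewrite (Sw_w _ _ _ _ _ (fun _ => 1)) by (intros; apply Oid_w).
  destruct a, b; simpl.
  - apply cprod_T_one.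
  - apply (cprod_T_off N th _ true). exists 0%nat; split; auto; lia.
  - apply (cprod_T_off N th _ false). exists 0%nat; split; auto; lia.
  - apply cprod_T_one.
Qed.

Lemma Sw_Z_off : forall N th a k, (2 <= N)%nat -> (k < N)%nat -> Sw N th a (negb a) (Zop k) = C0.
Proof. intros. rewrite (Sw_w _ _ _ _ _ (ez k)) by (intros; apply Zop_w; auto).
  apply cprod_T_off. exists (if Nat.eqb k 0 then 1%nat else 0%nat).
  unfold ez. destruct (Nat.eqb_spec k 0); subst; simpl; split; auto; try lia.
  destruct k; [lia|reflexivity]. Qed.
Lemma Sw_Z_0 : forall N th k, (k < N)%nat -> Sw N th false false (Zop k) = RtoC (Dq th k).
Proof. intros. rewrite (Sw_w _ _ _ _ _ (ez k)) by (intros; apply Zop_w; auto).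
  apply cprod_T_ez0; auto. Qed.
Lemma Sw_Z_1 : forall N th k, (k < N)%nat -> Sw N th true true (Zop k) = RtoC (- Dq th k).
Proof. intros. rewrite (Sw_w _ _ _ _ _ (ez k)) by (intros; apply Zop_w; auto).
  apply cprod_T_ez1; auto. Qed.

Lemma Sw_ZZ_off : forall N th a k l, (3 <= N)%nat -> (k < N)%nat -> (l < N)%nat ->
  Sw N th a (negb a) (Omul N (Zop k) (Zop l)) = C0.
Proof. intros. rewrite (Sw_w _ _ _ _ _ (fun j => ez k j * ez l j)) by (intros; apply ZZ_w; auto).
  apply cprod_T_off. unfold ez.
  assert (exists j, (j < 3)%nat /\ j <> k /\ j <> l) as [j [Hj [Hk Hl]]].
  { destruct (Nat.eq_dec k 0), (Nat.eq_dec l 0), (Nat.eq_dec k 1), (Nat.eq_dec l 1);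
    subst; try lia;
    try (exists 0%nat; lia); try (exists 1%nat; lia); try (exists 2%nat; lia). }
  exists j. split. lia. destruct (Nat.eqb_spec j k), (Nat.eqb_spec j l); try lia. ring.
Qed.
Lemma Sw_ZZ_diag : forall N th a k l, (k < N)%nat -> (l < N)%nat ->
  Sw N th a a (Omul N (Zop k) (Zop l)) = RtoC (rr th k l).
Proof. intros. rewrite (Sw_w _ _ _ _ _ (fun j => ez k j * ez l j)) by (intros; apply ZZ_w; auto).
  apply cprod_T_ezz; auto. Qed.

Lemma Sw_vZ : forall N th a b v, Sw N th a b (vZ N v) = csum N (fun k => Cmul (RtoC (v k)) (Sw N th a b (Zop k))).
Proof. intros. unfold vZ. rewrite Sw_sum. apply csum_ext; intros. apply Sw_scale. Qed.

Lemma Sw_L : forall N th a b lam vs i, Sw N th a b (Lop N lam vs i) =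
  Cmul (RtoC (sqrt (lam i))) (csum N (fun k => Cmul (RtoC (vs i k)) (Sw N th a b (Zop k)))).
Proof. intros. unfold Lop. rewrite Sw_scale, Sw_vZ. reflexivity. Qed.

Lemma Sw_LL : forall N th a b lam vs i j, Sw N th a b (Omul N (Lop N lam vs i) (Lop N lam vs j)) =
  csum N (fun k => csum N (fun l => Cmul (Cmul (Cmul (RtoC (sqrt (lam i))) (RtoC (sqrt (lam j))))
     (Cmul (RtoC (vs i k)) (RtoC (vs j l)))) (Sw N th a b (Omul N (Zop k) (Zop l))))).
Proof. intros. rewrite (Sw_ext _ _ _ _ _ (Osum N (fun k => Osum N (fun l =>
   Oscale (Cmul (Cmul (RtoC (sqrt (lam i))) (RtoC (sqrt (lam j))))
     (Cmul (RtoC (vs i k)) (RtoC (vs j l)))) (Omul N (Zop k) (Zop l)))))).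
  - rewrite Sw_sum. apply csum_ext; intros. rewrite Sw_sum. apply csum_ext; intros.
    apply Sw_scale.
  - intros. unfold Lop, vZ. apply Omul_LL.
Qed.

Lemma rsum_opp : forall n f, rsum n (fun k => - f k) = - rsum n f.
Proof. induction n; intros; simpl; [ring|rewrite IHn; ring]. Qed.

Lemma Sw_L_diag : forall N th a lam vs i, (i < N)%nat ->
  sqrt (lam i) * rsum N (fun k => vs i k * Dq th k) = 0 ->
  Sw N th a a (Lop N lam vs i) = C0.
Proof. intros. rewrite Sw_L. destruct a.
  - rewrite (csum_ext _ _ (fun k => RtoC (- (vs i k * Dq th k)))).
    + rewrite csum_RtoC, rsum_opp. apply Cx_eq; simpl; nra.
    + intros. rewrite Sw_Z_1 by auto. cx.
  - rewrite (csum_ext _ _ (fun k => RtoC (vs i k * Dq th k))).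
    + rewrite csum_RtoC. apply Cx_eq; simpl; nra.
    + intros. rewrite Sw_Z_0 by auto. cx.
Qed.

Definition Yv N (lam : nat -> R) (vs : nat -> rvec) (th : rvec) (i j : nat) : R := rsum N (fun k => rsum N (fun l =>
   sqrt (lam i) * sqrt (lam j) * (vs i k * vs j l) * rr th k l)).

Lemma Sw_LL_diag : forall N th a lam vs i j,
  Sw N th a a (Omul N (Lop N lam vs i) (Lop N lam vs j)) = RtoC (Yv N lam vs th i j).
Proof. intros. rewrite Sw_LL. unfold Yv. rewrite <- csum_RtoC. apply csum_ext; intros k Hk.
  rewrite <- csum_RtoC. apply csum_ext; intros l Hl. rewrite Sw_ZZ_diag by auto. cx. Qed.

Lemma span_Sw : forall N th lam vs S, (3 <= N)%nat ->
  (forall i, (i < N)%nat -> sqrt (lam i) * rsum N (fun k => vs i k * Dq th k) = 0) ->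
  in_lindblad_span N lam vs S ->
  exists c, (forall a, Sw N th a a S = RtoC c) /\ (forall a, Sw N th a (negb a) S = C0).
Proof. intros N th lam vs S HN Hl [a [b [c Heq]]].
  exists (a + rsum N (fun i => rsum N (fun j => c i j * Yv N lam vs th i j))).
  split; intros a0; rewrite (Sw_ext _ _ _ _ _ _ Heq); rewrite !Sw_add, !Sw_scale, !Sw_sum, Sw_Oid by lia.
  - rewrite Bool.eqb_reflx. rewrite (csum_zero N (fun i => Sw N th a0 a0 (Oscale (RtoC (b i)) (Lop N lam vs i)))).
    + rewrite (csum_ext _ _ (fun i => RtoC (rsum N (fun j => c i j * Yv N lam vs th i j)))).
      * rewrite csum_RtoC. cx.
      * intros i Hi. rewrite Sw_sum, <- csum_RtoC. apply csum_ext; intros j Hj.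
        rewrite Sw_scale, Sw_LL_diag. cx.
    + intros i Hi. rewrite Sw_scale, Sw_L_diag by auto. cx.
  - replace (Bool.eqb a0 (negb a0)) with false by (destruct a0; reflexivity).
    rewrite (csum_zero N (fun i => Sw N th a0 (negb a0) (Oscale (RtoC (b i)) (Lop N lam vs i)))).
    rewrite (csum_zero N (fun i => Sw N th a0 (negb a0) (Osum N (fun j => Oscale (RtoC (c i j))
      (Omul N (Lop N lam vs i) (Lop N lam vs j)))))). cx.
    + intros i Hi. rewrite Sw_sum. apply csum_zero. intros j Hj. rewrite Sw_scale, Sw_LL.
      rewrite csum_zero. cx. intros k Hk. rewrite csum_zero. cx. intros l Hl'.
      rewrite Sw_ZZ_off by auto. cx.
    + intros i Hi. rewrite Sw_scale, Sw_L. rewrite csum_zero. cx. intros k Hk.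
      rewrite Sw_Z_off by lia. cx.
Qed.

Lemma rsum_add : forall n f g, rsum n (fun i => f i + g i) = rsum n f + rsum n g.
Proof. induction n; intros; simpl; [ring|rewrite IHn; ring]. Qed.
Lemma rsum_scal : forall n c f, rsum n (fun i => c * f i) = c * rsum n f.
Proof. induction n; intros; simpl; [ring|rewrite IHn; ring]. Qed.
Lemma rsum_zero : forall n f, (forall i, (i < n)%nat -> f i = 0) -> rsum n f = 0.
Proof. induction n; intros f H; simpl; auto. rewrite IHn, H by (auto; intros; apply H; lia). ring. Qed.
Lemma rsum_swap : forall n m (f : nat -> nat -> R),
  rsum n (fun i => rsum m (f i)) = rsum m (fun j => rsum n (fun i => f i j)).
Proof. induction n; intros; simpl.
  - symmetry; apply rsum_zero; auto.
  - rewrite IHn, <- rsum_add. reflexivity. Qed.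
Lemma rsum_nonneg : forall n f, (forall i, (i < n)%nat -> 0 <= f i) -> 0 <= rsum n f.
Proof. induction n; intros f H; simpl. lra. pose proof (IHn f (fun i Hi => H i ltac:(lia))).
  pose proof (H n ltac:(lia)). lra. Qed.
Lemma rsum_sq_zero : forall n f, rsum n (fun i => f i * f i) = 0 -> forall i, (i < n)%nat -> f i = 0.
Proof. induction n; intros f H i Hi; simpl in *. lia.
  pose proof (rsum_nonneg n (fun i => f i * f i) (fun i _ => Rle_0_sqr (f i))).
  assert (f n * f n = 0) by nra. assert (rsum n (fun i => f i * f i) = 0) by nra.
  destruct (Nat.eq_dec i n). subst; nra. apply IHn; auto; lia. Qed.
Lemma rsum_sq_pos : forall n f j, (j < n)%nat -> f j <> 0 -> 0 < rsum n (fun i => f i * f i).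
Proof. intros. pose proof (rsum_nonneg n (fun i => f i * f i) (fun i _ => Rle_0_sqr (f i))).
  destruct H1; auto. exfalso. apply H0. apply (rsum_sq_zero n f); auto. Qed.

Lemma dot_comm : forall N u v, dot N u v = dot N v u.
Proof. intros. unfold dot. apply rsum_ext; intros; ring. Qed.

Lemma dot_sym : forall N (C : rmat) x y,
  (forall i j, (i < N)%nat -> (j < N)%nat -> C i j = C j i) ->
  dot N x (matvec N C y) = dot N (matvec N C x) y.
Proof. intros. unfold dot, matvec.
  rewrite (rsum_ext _ _ (fun i => rsum N (fun j => x i * C i j * y j))).
  rewrite rsum_swap. apply rsum_ext; intros j Hj.
  rewrite Rmult_comm, <- rsum_scal. apply rsum_ext; intros i Hi.
  rewrite (H j i) by auto. ring.
  intros. rewrite <- rsum_scal. apply rsum_ext; intros; ring. Qed.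

Lemma fold_max_nonneg : forall l, 0 <= fold_right Rmax 0 l -> True.
Proof. auto. Qed.
Lemma infnorm_l_nonneg : forall (l : list nat) (f : nat -> R), 0 <= fold_right Rmax 0 (map f l).
Proof. induction l; intros; simpl. lra. pose proof (IHl f). pose proof (Rmax_r (f a) (fold_right Rmax 0 (map f l))). lra. Qed.
Lemma infnorm_nonneg : forall N p, 0 <= infnorm N p.
Proof. intros. apply infnorm_l_nonneg. Qed.
Lemma infnorm_l_ge : forall (l : list nat) (f : nat -> R) j, In j l -> f j <= fold_right Rmax 0 (map f l).
Proof. induction l; intros f j H; simpl in *. tauto. destruct H.
  subst. apply Rmax_l. eapply Rle_trans. apply IHl; eauto. apply Rmax_r. Qed.
Lemma infnorm_ge : forall N p j, (j < N)%nat -> Rabs (p j) <= infnorm N p.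
Proof. intros. apply (infnorm_l_ge _ (fun j => Rabs (p j))). apply in_seq. lia. Qed.
Lemma infnorm_l_le : forall (l : list nat) (f : nat -> R) M, 0 <= M -> (forall j, In j l -> f j <= M) ->
  fold_right Rmax 0 (map f l) <= M.
Proof. induction l; intros f M H0 H; simpl. auto. apply Rmax_lub. apply H; simpl; auto.
  apply IHl; auto. intros; apply H; simpl; auto. Qed.
Lemma infnorm_le : forall N p M, 0 <= M -> (forall j, (j < N)%nat -> Rabs (p j) <= M) -> infnorm N p <= M.
Proof. intros. apply infnorm_l_le; auto. intros. apply H0. apply in_seq in H1. lia. Qed.
Lemma infnorm_pos : forall N p, 0 < infnorm N p -> exists j, (j < N)%nat /\ p j <> 0.
Proof. intros. destruct (Classical_Prop.classic (exists j, (j < N)%nat /\ p j <> 0)); auto.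
  exfalso. assert (infnorm N p <= 0). apply infnorm_le. lra. intros.
  destruct (Req_dec (p j) 0). rewrite H2, Rabs_R0; lra. exfalso; eauto. lra. Qed.
Lemma infnorm_ext : forall N p q, (forall j, (j < N)%nat -> p j = q j) -> infnorm N p = infnorm N q.
Proof. intros. unfold infnorm. f_equal. apply map_ext_in. intros. rewrite H. auto.
  apply in_seq in H0; lia. Qed.
Lemma infnorm_scale : forall N a u, infnorm N (fun j => a * u j) = Rabs a * infnorm N u.
Proof. intros. unfold infnorm. generalize (seq 0 N). induction l; simpl. ring.
  rewrite IHl, Rabs_mult, RmaxRmult. reflexivity. apply Rabs_pos. Qed.

Lemma Sw_outer : forall N th a b c d (A : Op),
  (forall x y, A x y = Cmul (psi N th c x) (Cconj (psi N th d y))) ->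
  Sw N th a b A = Cmul (Sw N th a c Oid) (Sw N th d b Oid).
Proof. intros. rewrite (Sw_diag _ _ a c Oid (fun _ => C1)), (Sw_diag _ _ d b Oid (fun _ => C1))
  by (intros; reflexivity).
  rewrite csum_prod. unfold Sw. apply csum_ext; intros. apply csum_ext; intros.
  rewrite H. ring. Qed.

Lemma Sw_codeP : forall N th a, (1 <= N)%nat -> Sw N th a a (codeP N th) = C1.
Proof. intros. unfold codeP. rewrite Sw_add.
  rewrite (Sw_outer _ _ _ _ false false (outer (ket0L N th) (ket0L N th))),
          (Sw_outer _ _ _ _ true true (outer (ket1L N th) (ket1L N th))).
  rewrite !Sw_Oid by auto. destruct a; simpl; cx.
  all: intros; unfold outer; rewrite ?ket1L_psi; reflexivity. Qed.
Lemma Sw_codeZL : forall N th a, (1 <= N)%nat ->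
  Sw N th a a (codeZL N th) = if a then RtoC (-1) else C1.
Proof. intros. unfold codeZL. rewrite Sw_add, Sw_scale.
  rewrite (Sw_outer _ _ _ _ false false (outer (ket0L N th) (ket0L N th))),
          (Sw_outer _ _ _ _ true true (outer (ket1L N th) (ket1L N th))).
  rewrite !Sw_Oid by auto. destruct a; simpl; cx.
  all: intros; unfold outer; rewrite ?ket1L_psi; reflexivity. Qed.

Lemma Sw_Ham_off : forall N th h a, (2 <= N)%nat -> Sw N th a (negb a) (Ham N h) = C0.
Proof. intros. unfold Ham. rewrite Sw_scale, Sw_vZ, csum_zero. cx.
  intros. rewrite Sw_Z_off by auto. cx. Qed.
Lemma Sw_Ham_0 : forall N th h, Sw N th false false (Ham N h) = RtoC (1/2 * rsum N (fun k => h k * Dq th k)).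
Proof. intros. unfold Ham. rewrite Sw_scale, Sw_vZ, RtoC_mul. f_equal.
  rewrite <- csum_RtoC. apply csum_ext; intros. rewrite Sw_Z_0 by auto. cx. Qed.
Lemma Sw_Ham_1 : forall N th h, Sw N th true true (Ham N h) = RtoC (- (1/2 * rsum N (fun k => h k * Dq th k))).
Proof. intros. unfold Ham. rewrite Sw_scale, Sw_vZ.
  rewrite (csum_ext _ _ (fun k => RtoC (- (h k * Dq th k)))).
  rewrite csum_RtoC, rsum_opp. cx.
  intros. rewrite Sw_Z_1 by auto. cx. Qed.

Theorem mainTheorem6 :
  forall (N : nat) (h : rvec) (C : rmat) (vs : nat -> rvec) (lam : nat -> R)
         (p : rvec) (gamma : R),
  (3 <= N)%nat ->
  (forall i j, (i < N)%nat -> (j < N)%nat -> C i j = C j i) ->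
  (forall x : rvec, 0 <= dot N x (matvec N C x)) ->
  (forall i j, (i < N)%nat -> (j < N)%nat ->
     dot N (vs i) (vs j) = if Nat.eqb i j then 1 else 0) ->
  (forall k i, (k < N)%nat -> (i < N)%nat -> matvec N C (vs k) i = lam k * vs k i) ->
  (forall k, (k < N)%nat -> 0 <= lam k) ->
  ~ in_col N C h ->
  is_orth_proj_ker N C h p ->
  0 < Rabs gamma <= / infnorm N p ->
  let bt : rvec := fun j => gamma * p j in
  let theta : rvec := fun j => acos (bt j) / 2 in
  let P := codeP N theta in
  let PHP := Omul N P (Omul N (Ham N h) P) in
  (forall S : Op, in_lindblad_span N lam vs S ->
     exists c : R, op_eq N (Omul N P (Omul N S P)) (Oscale (RtoC c) P)) /\
  op_eq N PHP (Oscale (RtoC (gamma / 2 * norm2sq N p)) (codeZL N theta)) /\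
  ~ (exists c : Cx, op_eq N PHP (Oscale c P)) /\
  (ker_dim1 N C -> gamma = / infnorm N p -> optimal N C h bt).
Proof.
  intros N h C vs lam p gamma HN Hsym Hpsd Horth Heig Hlam Hncol [Hker Hproj] [Hg1 Hg2]
    bt theta P PHP.
  set (g := infnorm N p) in *.
  assert (Hgpos : 0 < g).
  { destruct (infnorm_nonneg N p) as [H|H]. exact H. fold g in H. rewrite <- H in Hg2.
    rewrite Rinv_0 in Hg2. lra. }
  assert (Hbt : forall j, (j < N)%nat -> Rabs (bt j) <= 1).
  { intros. unfold bt. rewrite Rabs_mult. pose proof (infnorm_ge N p j H). fold g in H0.
    pose proof (Rabs_pos (p j)). 
    assert (/ g * g = 1) by (field; lra).
    assert (Rabs gamma * Rabs (p j) <= / g * g). apply Rmult_le_compat; auto; lra. lra. }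
  assert (HDq : forall j, (j < N)%nat -> Dq theta j = bt j).
  { intros. unfold Dq, theta. rewrite <- cos_2a.
    replace (2 * (acos (bt j) / 2)) with (acos (bt j)) by field.
    apply cos_acos. pose proof (Hbt j H). pose proof (Rle_abs (bt j)).
    pose proof (Rle_abs (- bt j)). rewrite Rabs_Ropp in H2. lra. }
  assert (HvDq : forall i, rsum N (fun k => vs i k * Dq theta k) = gamma * dot N (vs i) p).
  { intros. unfold dot. rewrite <- rsum_scal. apply rsum_ext; intros. rewrite HDq by auto.
    unfold bt. ring. }
  assert (Hlin : forall i, (i < N)%nat -> sqrt (lam i) * rsum N (fun k => vs i k * Dq theta k) = 0).
  { intros i Hi. rewrite HvDq.
    assert (lam i * dot N (vs i) p = 0).
    { transitivity (dot N (matvec N C (vs i)) p).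
      - unfold dot. rewrite <- rsum_scal. apply rsum_ext; intros. rewrite Heig by auto. ring.
      - rewrite <- dot_sym by auto. unfold dot. apply rsum_zero. intros. rewrite Hker by auto. ring. }
    destruct (Req_dec (lam i) 0). rewrite H0, sqrt_0. ring.
    assert (dot N (vs i) p = 0). apply (Rmult_eq_reg_l (lam i)). rewrite H. ring. auto.
    rewrite H1. ring. }
  assert (Hhp : dot N h p = norm2sq N p).
  { pose proof (Hproj p Hker). unfold norm2sq, dot in *.
    rewrite (rsum_ext _ _ (fun j => h j * p j + - (p j * p j))) in H by (intros; ring).
    rewrite rsum_add, rsum_opp in H. lra. }
  assert (HN1 : (1 <= N)%nat) by lia. assert (HN2 : (2 <= N)%nat) by lia.
  set (m := gamma / 2 * norm2sq N p).
  assert (Hm : 1/2 * rsum N (fun k => h k * Dq theta k) = m).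
  { unfold m. rewrite <- Hhp. unfold dot.
    rewrite (rsum_ext _ _ (fun k => gamma * (h k * p k))).
    rewrite rsum_scal. field. intros. rewrite HDq by auto. unfold bt. ring. }
  assert (Part2 : op_eq N PHP (Oscale (RtoC m) (codeZL N theta))).
  { intros x y Hx Hy. unfold PHP, P. rewrite PSP_formula.
    pose proof (Sw_Ham_off N theta h false HN2) as E1. pose proof (Sw_Ham_off N theta h true HN2) as E2.
    simpl negb in E1, E2.
    rewrite E1, E2, Sw_Ham_0, Sw_Ham_1, Hm. unfold Oscale. rewrite codeZL_psi.
    rewrite !RtoC_opp. replace (RtoC (-1)) with (Copp C1) by cx. ring. }
  split; [|split; [exact Part2|split]].
  -
    intros S HS. destruct (span_Sw N theta lam vs S HN Hlin HS) as [c [Hd Ho]].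
    exists c. intros x y Hx Hy. unfold P. rewrite PSP_formula.
    pose proof (Ho false) as E1. pose proof (Ho true) as E2. simpl negb in E1, E2.
    rewrite E1, E2, (Hd false), (Hd true). unfold Oscale. rewrite codeP_psi. ring.
  -
    intros [c Hc].
    assert (E : forall a, Sw N theta a a (Oscale (RtoC m) (codeZL N theta)) = Sw N theta a a (Oscale c P)).
    { intros. apply Sw_ext. intros. rewrite <- Part2 by auto. apply Hc; auto. }
    pose proof (E false) as E0. pose proof (E true) as E1.
    rewrite !Sw_scale in E0, E1. unfold P in *. rewrite Sw_codeZL, Sw_codeP in E0, E1 by auto.
    assert (m = 0).
    { destruct c as [c1 c2]. apply (f_equal re) in E0. apply (f_equal re) in E1. simpl in *. lra. }
    unfold m in H. destruct (infnorm_pos N p Hgpos) as [j [Hj Hpj]].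
    pose proof (rsum_sq_pos N p j Hj Hpj). unfold norm2sq, dot in H.
    assert (gamma <> 0). { intro. rewrite H1, Rabs_R0 in Hg1. lra. }
    apply H1. apply (Rmult_eq_reg_r (rsum N (fun i => p i * p i) / 2)). lra. 
    apply Rgt_not_eq. lra.
  -
    intros [u [Hu [[j0 [Hj0 Hu0]] Hall]]] Hgam.
    assert (Hbtker : in_ker N C bt).
    { intros i Hi. unfold matvec, bt.
      rewrite (rsum_ext _ _ (fun j => gamma * (C i j * p j))) by (intros; ring).
      rewrite rsum_scal. pose proof (Hker i Hi) as HH. unfold matvec in HH. rewrite HH. ring. }
    assert (Hdh : forall b, in_ker N C b -> dot N b h = dot N b p).
    { intros b Hb. pose proof (Hproj b Hb). unfold dot in *.
      rewrite (rsum_ext _ _ (fun j => b j * h j + - (b j * p j))) in H by (intros; ring).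
      rewrite rsum_add, rsum_opp in H. lra. }
    assert (Hfeas : feasible N C bt).
    { split.
      - apply infnorm_le. lra. auto.
      - intros w [y Hy]. unfold dot. rewrite (rsum_ext _ _ (fun j => bt j * matvec N C y j))
          by (intros; rewrite Hy; auto).
        fold (dot N bt (matvec N C y)). rewrite dot_sym by auto. unfold dot.
        apply rsum_zero. intros. rewrite Hbtker by auto. ring. }
    split; auto.
    intros b' [Hb1 Hb2].
    assert (Hb'ker : in_ker N C b').
    { set (z := matvec N C b').
      assert (dot N b' (matvec N C z) = 0). { apply Hb2. exists z. auto. }
      rewrite dot_sym in H by auto. fold z in H. unfold dot in H.
      intros i Hi. apply (rsum_sq_zero N z H i Hi). }
    rewrite (Hdh b' Hb'ker), (Hdh bt Hbtker).
    destruct (Hall b' Hb'ker) as [t Ht]. destruct (Hall p Hker) as [s Hs].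
    set (U := dot N u u).
    assert (HU : 0 <= U). { apply rsum_nonneg. intros. apply Rle_0_sqr. }
    assert (E1 : dot N b' p = t * s * U).
    { unfold U, dot. rewrite <- rsum_scal. apply rsum_ext. intros. rewrite Ht, Hs by auto. ring. }
    assert (E2 : dot N bt p = gamma * (s * s) * U).
    { unfold U, dot, bt. rewrite <- rsum_scal. apply rsum_ext. intros. rewrite Hs by auto. ring. }
    set (nu := infnorm N u).
    assert (Hnu : 0 < nu).
    { pose proof (infnorm_ge N u j0 Hj0). pose proof (Rabs_pos_lt _ Hu0). fold nu in H. lra. }
    assert (Eg : g = Rabs s * nu).
    { unfold g, nu. rewrite <- infnorm_scale. apply infnorm_ext. auto. }
    assert (Eb : infnorm N b' = Rabs t * nu).
    { unfold nu. rewrite <- infnorm_scale. apply infnorm_ext. auto. }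
    assert (Hs0 : 0 < Rabs s).
    { destruct (Rabs_pos s); auto. rewrite <- H in Eg. lra. }
    assert (Hgg : gamma * (Rabs s * nu) = 1). { rewrite Hgam, <- Eg. field. lra. }
    assert (Ht1 : Rabs t <= gamma * Rabs s).
    { apply (Rmult_le_reg_r nu); auto. rewrite <- Eb. nra. }
    rewrite E1, E2.
    assert (t * s <= Rabs t * Rabs s). { rewrite <- Rabs_mult. apply Rle_abs. }
    assert (s * s = Rabs s * Rabs s). { rewrite <- Rabs_mult. rewrite Rabs_right. auto. nra. }
    pose proof (Rabs_pos t).
    apply Rmult_le_compat_r; auto. nra.
Qed.
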